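(* Let $Z$ be the precubical set with exactly one cube $z^n$ in each dimension $n\ge0$, and let $J(S^1)=J(S^1,1)$ be the James construction on the circle. The map $f:|Z|\to J(S^1)$ given by $f([z^n;x_1,\dots,x_n])=(e^{2\pi i x_1},\dots,e^{2\pi i x_n})$ is a well-defined homeomorphism.
   Context: A precubical set $K$ has sets $K[n]$ of $n$-cubes and face maps $d^\varepsilon_i:K[n]\to K[n-1]$ ($1\le i\le n$, $\varepsilon\in\{0,1\}$); for $Z$ necessarily $d^\varepsilon_i z^n=z^{n-1}$. The geometric realization $|K|=\coprod_n K[n]\times[0,1]^n/\sim$, with $(d^\varepsilon_i c,\mathbf x)\sim(c,\delta^\varepsilon_i\mathbf x)$ where $\delta^\varepsilon_i(x_1,\dots,x_{n-1})=(x_1,\dots,x_{i-1},\varepsilon,x_i,\dots,x_{n-1})$, carries the quotient topology; $[c;\mathbf x]$ is the class. For a pointed space $(X,x_0)$, $J_n(X)$ is the quotient of $X^n$ by $(x_1,\dots,x_i,x_0,x_{i+1},\dots,x_{n-1})\sim(x_1,\dots,x_0,x_i,x_{i+1},\dots,x_{n-1})$ (moving the base point), with inclusions $J_n(X)\subseteq J_{n+1}(X)$ appending $x_0$ in the last position, and $J(X)=\mathrm{colim}_n J_n(X)$ (the free topological monoid on $(X,x_0)$); the class of $(y_1,\dots,y_n)$ is written $(y_1,\dots,y_n)$. *)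

(* Defs.v *)
From HB Require Import structures.
From mathcomp Require Import all_boot all_order all_algebra.
From mathcomp Require Import generic_quotient.
From mathcomp Require Import all_classical all_reals.
From mathcomp Require Import topology normedtype trigo.
Import numFieldNormedType.Exports.
From Stdlib Require Import Relations.Relation_Operators.

Set Implicit Arguments.
Unset Strict Implicit.
Unset Printing Implicit Defensive.
Import Order.TTheory GRing.Theory Num.Theory.
Local Open Scope classical_set_scope.
Local Open Scope ring_scope.
Local Open Scope quotient_scope.

Section GenQuot.
Context {T : topologicalType} (r : T -> T -> Prop).

Definition gen_equiv : rel T :=
  fun x y => `[< clos_refl_sym_trans T r x y >].

Lemma gen_equiv_refl : reflexive gen_equiv.
Proof. by move=> x; apply/asboolP; apply: rst_refl. Qed.
Lemma gen_equiv_sym : symmetric gen_equiv.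
Proof.
move=> x y; apply/asboolP/asboolP => h; exact: rst_sym.
Qed.
Lemma gen_equiv_trans : transitive gen_equiv.
Proof.
move=> y x z /asboolP h1 /asboolP h2; apply/asboolP; exact: rst_trans h1 h2.
Qed.

Definition gen_equiv_rel : equiv_rel T :=
  EquivRel gen_equiv gen_equiv_refl gen_equiv_sym gen_equiv_trans.

Definition quot_space : topologicalType :=
  quotient_topology {eq_quot gen_equiv_rel}.

Definition quot_pi : T -> quot_space := \pi_quot_space.
End GenQuot.

Definition homeomorphism {X Y : topologicalType} (f : X -> Y) : Prop :=
  exists g : Y -> X, [/\ cancel f g, cancel g f, continuous f & continuous g].

Section Defs.
Variable R : realType.

Definition insert_at {S : Type} {n : nat} (i : 'I_n.+1) (e : S)
  (x : 'rV[S]_n) : 'rV[S]_n.+1 :=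
  \row_j match unlift i j with None => e | Some k => x ord0 k end.

Definition cube (n : nat) : set 'rV[R]_n :=
  [set x | forall j, 0 <= x ord0 j <= 1].
Arguments cube n : clear implicits.

(** disjoint union  coprod_n Z[n] x [0,1]^n  (Z[n] is a singleton) *)
Definition ZDom : topologicalType := {n : nat & set_type (cube n)}.

(** (d^e_i z^{n+1}, x) ~ (z^{n+1}, delta^e_i x) *)
Definition Zrel (p q : ZDom) : Prop :=
  exists (n : nat) (x : set_type (cube n)) (y : set_type (cube n.+1))
         (i : 'I_n.+1) (e : bool),
    [/\ p = existT _ n x, q = existT _ n.+1 y &
        \val y = insert_at i (e%:R) (\val x)].

Definition realZ : topologicalType := quot_space Zrel.

Definition circle : set (R * R) := [set z | z.1 ^+ 2 + z.2 ^+ 2 = 1].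
Definition S1 : topologicalType := set_type circle.

Lemma circle1 : circle (1, 0).
Proof. by rewrite /circle /= expr1n expr0n addr0. Qed.
Definition S1pt : S1 := exist _ (1, 0) (mem_set circle1).

Lemma circle_exp (t : R) : circle (cos (2 * pi * t), sin (2 * pi * t)).
Proof. by rewrite /circle /= cos2Dsin2. Qed.
Definition expS1 (t : R) : S1 :=
  exist _ (cos (2 * pi * t), sin (2 * pi * t)) (mem_set (circle_exp t)).

Definition JDom : topologicalType := {n : nat & 'rV[S1]_n}.

(** generating relations of J(S^1): moving the base point one step, and
    the inclusions J_n -> J_{n+1} appending the base point *)
Definition Jrel (p q : JDom) : Prop :=
  (exists (m : nat) (w : 'rV[S1]_m) (i j : 'I_m.+1),
      val j = (val i).+1 /\
      p = existT _ m.+1 (insert_at j S1pt w) /\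
      q = existT _ m.+1 (insert_at i S1pt w))
  \/
  (exists (m : nat) (w : 'rV[S1]_m),
      p = existT _ m w /\ q = existT _ m.+1 (insert_at ord_max S1pt w)).

Definition JS1 : topologicalType := quot_space Jrel.

Definition fformula (p : ZDom) : JDom :=
  let: existT n x := p in existT _ n (\row_j expS1 (\val x ord0 j)).
End Defs.

(* Main.v *)
Require Import Defs.
From HB Require Import structures.
From mathcomp Require Import all_boot all_order all_algebra.
From mathcomp Require Import generic_quotient.
From mathcomp Require Import all_classical all_reals.
From mathcomp Require Import topology normedtype trigo.
From mathcomp Require Import ring lra zify.
Import numFieldNormedType.Exports.
From Stdlib Require Import Relations.Relation_Operators.

Set Implicit Arguments.
Unset Strict Implicit.
Unset Printing Implicit Defensive.
Import Order.TTheory GRing.Theory Num.Theory.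
Local Open Scope classical_set_scope.
Local Open Scope ring_scope.
Local Open Scope quotient_scope.

Section Circle.
Variable R : realType.

Lemma S1_eq (u v : S1 R) : (val u).1 = (val v).1 -> (val u).2 = (val v).2 -> u = v.
Proof. move=> h1 h2; apply: val_inj; case: u h1 h2 => [[a b] ?]; case: v => [[c d] ?] /= -> -> //. Qed.

Lemma expS1_0 : expS1 0 = S1pt R.
Proof. by apply: S1_eq => /=; rewrite mulr0 ?cos0 ?sin0. Qed.

Lemma expS1_1 : expS1 1 = S1pt R.
Proof. apply: S1_eq => /=; rewrite mulr1 mulr_natl ?cos2pi ?sin2pi //. Qed.

Lemma expS1_bool (e : bool) : expS1 (e%:R) = S1pt R.
Proof. by case: e; [exact: expS1_1|exact: expS1_0]. Qed.
End Circle.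

Section Ang.
Variable R : realType.
Definition ang (w : S1 R) : R :=
  if 0 <= (val w).2 then acos (val w).1 / (2 * pi) else 1 - acos (val w).1 / (2 * pi).

Lemma S1_circ (w : S1 R) : (val w).1 ^+ 2 + (val w).2 ^+ 2 = 1.
Proof. by case: w => [[a b] /= /set_mem]. Qed.

Lemma S1_bnd (w : S1 R) : -1 <= (val w).1 <= 1.
Proof.
have h := S1_circ w; rewrite -ler_norml -(@ler_pXn2r _ 2) ?nnegrE //.
by rewrite real_normK ?num_real // expr1n -h lerDl sqr_ge0.
Qed.

Lemma pi2_gt0 : 0 < 2 * pi :> R.
Proof. by rewrite mulr_gt0 ?pi_gt0. Qed.

Lemma ang_cube (w : S1 R) : 0 <= ang w <= 1.
Proof.
have h0 := acos_ge0 (S1_bnd w); have h1 := acos_lepi (S1_bnd w).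
have hp := pi2_gt0; have pp := @pi_gt0 R.
have a0 : 0 <= acos (val w).1 / (2 * pi) by rewrite divr_ge0 // ltW.
have a1 : acos (val w).1 / (2 * pi) <= 1.
  by rewrite ler_pdivrMr // mul1r; lra.
rewrite /ang; case: ifP => _; first by rewrite a0 a1.
by rewrite subr_ge0 a1 lerBlDr lerDl a0.
Qed.

Lemma expS1_ang (w : S1 R) : expS1 (ang w) = w.
Proof.
have hb := S1_bnd w; have hc := S1_circ w.
have hp := pi2_gt0; have pp := @pi_gt0 R.
have hs : sin (acos (val w).1) = `|(val w).2|.
  rewrite sin_acos // -hc addrAC subrr add0r sqrtr_sqr //.
have hc' : cos (acos (val w).1) = (val w).1 by rewrite acosK ?in_itv.
have k (x : R) : 2 * pi * (x / (2 * pi)) = x.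
  by rewrite [LHS]mulrC divfK // (gt_eqF hp).
have e2 : 2 * pi = pi *+ 2 :> R by rewrite mulrC mulr_natr.
rewrite /ang; case: ifP => hb2; apply: S1_eq => /=; change (sval w) with (\val w).
- by rewrite k.
- by rewrite k hs ger0_norm.
- rewrite mulrBr mulr1 k e2.
  by rewrite cosB cos2pi sin2pi mul0r mul1r addr0.
- rewrite mulrBr mulr1 k e2.
  rewrite sinB cos2pi sin2pi mul0r mul1r sub0r hs ltr0_norm ?opprK //.
  by rewrite ltNge hb2.
Qed.

Lemma ang_expS1 (t : R) : 0 <= t <= 1 -> ang (expS1 t) = if t == 1 then 0 else t.
Proof.
move=> /andP[t0 t1]; have hp := pi2_gt0; have pp := @pi_gt0 R.
have e2 : 2 * pi = pi *+ 2 :> R by rewrite mulrC mulr_natr.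
have hk (x : R) : 2 * pi * x / (2 * pi) = x by rewrite mulrC mulKf // (gt_eqF hp).
case: eqP => [->|/eqP t1'].
  by rewrite /ang /= mulr1 e2 cos2pi sin2pi lexx acos1 mul0r.
rewrite /ang /=.
have [th|th] := leP t (2^-1).
- have hI : 0 <= 2 * pi * t <= pi.
    apply/andP; split; first by rewrite mulr_ge0 // ltW.
    have : 2 * pi * t <= 2 * pi * 2^-1 by rewrite ler_pM2l.
    move=> h; lra.
  have -> : 0 <= sin (2 * pi * t) by apply: sin_ge0_pi.
  by rewrite cosK ?in_itv //= hk.
- have tl1 : t < 1 by rewrite lt_neqAle t1' t1.
  have hI : 0 < 2 * pi - 2 * pi * t < pi.
    apply/andP; split; first by rewrite subr_gt0 gtr_pMr.
    have : 2 * pi * 2^-1 < 2 * pi * t by rewrite ltr_pM2l.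
    move=> h; lra.
  have hcos : cos (2 * pi * t) = cos (2 * pi - 2 * pi * t).
    by rewrite cosB e2 cos2pi sin2pi mul0r mul1r addr0.
  have hsin : sin (2 * pi * t) = - sin (2 * pi - 2 * pi * t).
    by rewrite sinB e2 cos2pi sin2pi mul0r mul1r sub0r opprK.
  have -> : (0 <= sin (2 * pi * t)) = false.
    by rewrite hsin oppr_ge0 leNgt sin_gt0_pi.
  rewrite hcos cosK; last first.
    by rewrite in_itv /=; apply/andP; split; apply: ltW; case/andP: hI.
  rewrite -{1}[2 * pi]mulr1 -mulrBr hk; lra.
Qed.
End Ang.

Section GQ.
Context {T : topologicalType} (r : T -> T -> Prop).
Lemma quot_piP (p q : T) :
  quot_pi r p = quot_pi r q <-> clos_refl_sym_trans T r p q.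
Proof.
rewrite /quot_pi /quot_space.
change (\pi_{eq_quot gen_equiv_rel r} p = \pi q <-> clos_refl_sym_trans T r p q).
split; first by move/eqmodP => /asboolP.
by move=> h; apply/eqmodP; apply/asboolP.
Qed.
Lemma quot_pi_rel (p q : T) : r p q -> quot_pi r p = quot_pi r q.
Proof. by move=> h; apply/quot_piP; apply: rst_step. Qed.
Lemma quot_pi_repr (x : quot_space r) : quot_pi r (repr x) = x.
Proof. exact: reprK. Qed.
End GQ.

Section ZComb.
Variable R : realType.
Local Notation C n := (set_type (@cube R n)).

Definition mkC n (x : 'rV[R]_n) (hx : @cube R n x) : C n := exist _ x (mem_set hx).

Lemma cubeP n (x : C n) j : 0 <= val x ord0 j <= 1.
Proof. exact: (set_mem (valP x)). Qed.

Definition Zpt n (x : C n) : realZ R := quot_pi (@Zrel R) (existT _ n x).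

Lemma row_delete {S : Type} n (x : 'rV[S]_n.+1) (i : 'I_n.+1) :
  x = insert_at i (x ord0 i) (\row_k x ord0 (lift i k)).
Proof.
apply/rowP => j; rewrite /insert_at !mxE; case: unliftP => [k ->|->] //.
by rewrite mxE.
Qed.

Lemma endpt_bool (a : R) : a = 0 \/ a = 1 -> exists e : bool, a = e%:R.
Proof. by case=> ->; [exists false|exists true]. Qed.

Lemma Z_step n (x y : C n.+1) (i : 'I_n.+1) :
  (forall j, j != i -> val x ord0 j = val y ord0 j) ->
  (val x ord0 i = 0 \/ val x ord0 i = 1) -> (val y ord0 i = 0 \/ val y ord0 i = 1) ->
  Zpt x = Zpt y.
Proof.
move=> hxy /endpt_bool [ex hex] /endpt_bool [ey hey].
have hu : @cube R n (\row_k val x ord0 (lift i k)).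
  by move=> k; rewrite mxE; exact: cubeP.
pose u := mkC hu.
have -> : Zpt x = Zpt u.
  symmetry; apply: quot_pi_rel; exists n, u, x, i, ex; split => //.
  by rewrite /= -hex -row_delete.
apply: quot_pi_rel; exists n, u, y, i, ey; split => //.
rewrite /=; transitivity (insert_at i (val y ord0 i) (\row_k val y ord0 (lift i k))).
  exact: row_delete.
rewrite hey; f_equal; apply/rowP => k; by rewrite !mxE hxy // eq_sym neq_lift.
Qed.

Definition endpt (a : R) := a = 0 \/ a = 1.

Lemma Z_coords n (x y : C n) :
  (forall j, val x ord0 j = val y ord0 j \/ (endpt (val x ord0 j) /\ endpt (val y ord0 j))) ->
  Zpt x = Zpt y.
Proof.
move=> hj.
have hz k : @cube R n (\row_j if (j < k)%N then val y ord0 j else val x ord0 j).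
  by move=> j; rewrite mxE; case: ifP => _; exact: cubeP.
have key k : (k <= n)%N -> Zpt x = Zpt (mkC (hz k)).
  elim: k => [_|k IH hk].
    by congr Zpt; apply: val_inj; apply/rowP => j; rewrite /= mxE.
  rewrite IH ?(ltnW hk) //.
  case: n x y hj hz IH hk => [//|n] x y hj hz IH hk.
  pose i : 'I_n.+1 := Ordinal hk.
  have [he|[e1 e2]] := hj i.
    congr Zpt; apply: val_inj; apply/rowP => j; rewrite /= !mxE.
    case: ifP => h1; case: ifP => h2 //; first by exfalso; lia.
    have -> : j = i by apply: val_inj => /=; lia.
    by rewrite he.
  apply: Z_step (i) _ _ _.
  - move=> j hji; rewrite /= !mxE.
    case: ifP => h1; case: ifP => h2 //; first by exfalso; lia.
    by exfalso; move/eqP: hji; apply; apply: val_inj => /=; lia.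
  - rewrite /= mxE ltnn; exact: e1.
  - rewrite /= mxE ltnSn; exact: e2.
rewrite (key n (leqnn n)); congr Zpt; apply: val_inj; apply/rowP => j.
by rewrite /= mxE ltn_ord.
Qed.
End ZComb.

Section JComb.
Variable R : realType.
Definition Jp n (w : 'rV[S1 R]_n) : JS1 R := quot_pi (@Jrel R) (existT _ n w).

Lemma J_insert m (w : 'rV[S1 R]_m) (i : 'I_m.+1) :
  Jp (insert_at i (S1pt R) w) = Jp w.
Proof.
suff H : forall d (i : 'I_m.+1), (m - i)%N = d -> Jp (insert_at i (S1pt R) w) = Jp w.
  exact: (H _ i erefl).
elim=> [|d IH] {}i hd.
  have -> : i = ord_max by apply: val_inj => /=; have := ltn_ord i; lia.
  symmetry; apply: quot_pi_rel; right; by exists m, w.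
have hi : (i.+1 < m.+1)%N by lia.
pose j : 'I_m.+1 := Ordinal hi.
rewrite -(IH j) /=; last by lia.
symmetry; apply: quot_pi_rel; left; exists m, w, i, j; by split.
Qed.

Lemma fformula_Zrel (p q : ZDom R) : Zrel p q ->
  quot_pi (@Jrel R) (fformula p) = quot_pi (@Jrel R) (fformula q).
Proof.
case=> n [x [y [i [e [-> -> hy]]]]] /=.
have -> : (\row_j expS1 (val y ord0 j)) = insert_at i (S1pt R) (\row_j expS1 (val x ord0 j)).
  apply/rowP => j; rewrite hy /insert_at !mxE; case: (unlift i j) => [k|].
    by rewrite mxE.
  exact: expS1_bool.
symmetry; exact: (J_insert _ i).
Qed.

Lemma part1 (p q : ZDom R) : quot_pi (@Zrel R) p = quot_pi (@Zrel R) q ->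
     quot_pi (@Jrel R) (fformula p) = quot_pi (@Jrel R) (fformula q).
Proof.
move/quot_piP; elim => [a b|a|a b _ IH|a b c _ IH1 _ IH2] //.
- exact: fformula_Zrel.
- by rewrite IH1.
Qed.
End JComb.

Section Inv.
Variable R : realType.
Local Notation C n := (set_type (@cube R n)).

Lemma angv_cube n (w : 'rV[S1 R]_n) : @cube R n (\row_j ang (w ord0 j)).
Proof. by move=> j; rewrite mxE; exact: ang_cube. Qed.

Definition angv n (w : 'rV[S1 R]_n) : C n := mkC (angv_cube w).

Definition Gf (p : JDom R) : realZ R := let: existT n w := p in Zpt (angv w).

Lemma ang_pt : ang (S1pt R) = 0.
Proof. by rewrite /ang /= lexx acos1 mul0r. Qed.

Lemma G_insert m (w : 'rV[S1 R]_m) (i : 'I_m.+1) :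
  Gf (existT _ m.+1 (insert_at i (S1pt R) w)) = Gf (existT _ m w).
Proof.
symmetry; apply: quot_pi_rel; exists m, (angv w), (angv (insert_at i (S1pt R) w)), i, false.
split => //=; apply/rowP => j; rewrite /insert_at !mxE; case: (unlift i j) => [k|].
  by rewrite !mxE.
by rewrite ang_pt.
Qed.

Lemma G_resp (p q : JDom R) : quot_pi (@Jrel R) p = quot_pi (@Jrel R) q -> Gf p = Gf q.
Proof.
move/quot_piP; elim => [a b|a|a b _ IH|a b c _ IH1 _ IH2] //.
- case=> [[m [w [i [j [_ [-> ->]]]]]]|[m [w [-> ->]]]].
    by rewrite !G_insert.
  by rewrite G_insert.
- by rewrite IH1.
Qed.

Lemma G_fformula (p : ZDom R) : Gf (fformula p) = quot_pi (@Zrel R) p.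
Proof.
case: p => n x /=; apply: Z_coords => j /=; rewrite !mxE ang_expS1 ?cubeP //.
case: eqP => [->|_]; last by left.
by right; split; [left|right].
Qed.

Lemma F_angv n (w : 'rV[S1 R]_n) : fformula (existT _ n (angv w)) = existT _ n w.
Proof.
rewrite /=; congr existT; apply/rowP => j; rewrite !mxE; exact: expS1_ang.
Qed.

Definition fmapZ (q : realZ R) : JS1 R := quot_pi (@Jrel R) (fformula (repr q)).
Definition gmapJ (q : JS1 R) : realZ R := Gf (repr q).

Lemma fmapZE p : fmapZ (quot_pi (@Zrel R) p) = quot_pi (@Jrel R) (fformula p).
Proof. by apply: part1; rewrite quot_pi_repr. Qed.

Lemma gmapJE p : gmapJ (quot_pi (@Jrel R) p) = Gf p.
Proof. by apply: G_resp; rewrite quot_pi_repr. Qed.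

Lemma fmapK : cancel fmapZ gmapJ.
Proof.
move=> q; rewrite -(quot_pi_repr q) fmapZE gmapJE; exact: G_fformula.
Qed.

Lemma gmapK : cancel gmapJ fmapZ.
Proof.
move=> q; rewrite -(quot_pi_repr q) gmapJE; case: (repr q) => n w /=.
by rewrite fmapZE F_angv.
Qed.
End Inv.

Section Topo.

Lemma sigT_cont {I : choiceType} {X : I -> topologicalType} {Z : topologicalType}
  (phi : forall i, X i -> Z) : (forall i, continuous (phi i)) ->
  continuous (fun p : {i & X i} => let: existT i x := p in phi i x).
Proof. by move=> ctsf [] i x U nU; apply: existT_continuous; exact: ctsf. Qed.

Lemma cont_into_sub {Z X : topologicalType} (A : set X) (h : Z -> set_type A) :
  continuous (fun z => val (h z)) -> continuous h.
Proof.
move=> /continuousP ch; apply/continuousP => U [O oO <-].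
exact: (ch O oO).
Qed.

Lemma val_cont {X : topologicalType} (A : set X) : continuous (fun x : set_type A => val x).
Proof. exact: initial_continuous. Qed.

Lemma coord_cont {T : topologicalType} m n (i : 'I_m) (j : 'I_n) :
  continuous (fun M : 'M[T]_(m, n) => M i j).
Proof.
move=> M A hA.
exists (fun i' j' => if (i' == i) && (j' == j) then A else setT).
  move=> i' j'; case: ifP => [/andP[/eqP -> /eqP ->] //|_]; exact: filterT.
by move=> N /(_ i j); rewrite !eqxx.
Qed.

Lemma into_mx_cont {Z T : topologicalType} m n (h : Z -> 'M[T]_(m, n)) :
  (forall i j, continuous (fun z => h z i j)) -> continuous h.
Proof.
move=> ch z A [P hP sPA].
have : \forall z' \near z, forall ij : 'I_m * 'I_n, P ij.1 ij.2 (h z' ij.1 ij.2).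
  apply: filter_forall => -[i j] /=; exact: (ch i j z _ (hP i j)).
apply: filterS => z' hz'; apply: sPA => i j; exact: (hz' (i, j)).
Qed.

Lemma inj_hausdorff {X Y : topologicalType} (phi : X -> Y) :
  continuous phi -> injective phi -> hausdorff_space Y -> hausdorff_space X.
Proof.
move=> cphi iphi hY p q cl; apply: iphi; apply: hY => A B nA nB.
have [z [h1 h2]] := cl _ _ (cphi p _ nA) (cphi q _ nB).
by exists (phi z).
Qed.

Lemma mx_hausdorff {T : topologicalType} m n :
  hausdorff_space T -> hausdorff_space 'M[T]_(m, n).
Proof.
move=> hT p q cl; apply/matrixP => i j; apply: hT => A B nA nB.
have [z [h1 h2]] := cl _ _ (@coord_cont _ _ _ i j p _ nA) (@coord_cont _ _ _ i j q _ nB).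
by exists (z i j).
Qed.
End Topo.

Section S1top.
Variable R : realType.
Lemma RR_hausdorff : hausdorff_space (R * R)%type.
Proof. exact: norm_hausdorff. Qed.
End S1top.

Section Cont.
Variable R : realType.
Local Notation C n := (set_type (@cube R n)).

Lemma expS1_cont : continuous (@expS1 R).
Proof.
apply: (@cont_into_sub _ _ (@circle R) (@expS1 R)) => t /=.
have h1 : continuous (fun z : R => cos (2 * pi * z)).
  move=> z; apply: (@continuous_comp _ _ _ ( *%R (2 * pi)) cos); first exact: mulrl_continuous.
  exact: continuous_cos.
have h2 : continuous (fun z : R => sin (2 * pi * z)).
  move=> z; apply: (@continuous_comp _ _ _ ( *%R (2 * pi)) sin); first exact: mulrl_continuous.
  exact: continuous_sin.
exact: (cvg_pair (h1 t) (h2 t)).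
Qed.

Lemma S1_hausdorff : hausdorff_space (S1 R).
Proof. apply: (inj_hausdorff (@val_cont _ _) val_inj); exact: RR_hausdorff. Qed.

Definition Emap n (x : 'rV[R]_n) : 'rV[S1 R]_n := \row_j expS1 (x ord0 j).

Lemma Emap_cont n : continuous (@Emap n).
Proof.
apply: into_mx_cont => i j.
have -> : (fun x => Emap x i j) = (@expS1 R) \o (fun x : 'rV[R]_n => x ord0 j).
  by apply/funext => x; rewrite /Emap mxE.
move=> x; apply: continuous_comp; first exact: coord_cont.
exact: expS1_cont.
Qed.

Lemma fformula_cont : continuous (@fformula R).
Proof.
have -> : @fformula R = (fun p : ZDom R => let: existT n x := p in existT _ n (Emap (val x))).
  by apply/funext => -[n x].
apply: sigT_cont => n x; apply: continuous_comp; last exact: existT_continuous.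
apply: continuous_comp; [exact: val_cont | exact: Emap_cont].
Qed.

Lemma cube_compact n : compact (@cube R n).
Proof.
have -> : @cube R n = [set v | forall i, `[0, 1]%classic (v ord0 i)].
  by apply/seteqP; split => v h i; have := h i; rewrite /= in_itv.
exact: (@rV_compact R n (fun _ => `[0, 1]%classic) (fun _ => @segment_compact R 0 1)).
Qed.

Lemma cube_closed n : closed (@cube R n).
Proof. apply: compact_closed; [exact: mx_hausdorff (@Rhausdorff R)| exact: cube_compact]. Qed.

Lemma e_closed n (K : set (C n)) : closed K -> closed ((fun x : C n => Emap (val x)) @` K).
Proof.
move=> cK; have := closed_openC cK => -[O oO hO].
have hv : (fun x : C n => val x) @` K = @cube R n `&` ~` O.
  apply/seteqP; split.
    move=> _ [x Kx <-]; split; first exact: (set_mem (valP x)).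
    move=> Ox; have : (~` K) x by rewrite -hO.
    by apply.
  move=> v [cv nO]; exists (mkC cv) => //.
  apply: contrapT => nK; apply: nO.
  have : (~` K) (mkC cv) by [].
  by rewrite -hO.
rewrite -(image_comp (fun x : C n => val x) (@Emap n)).
apply: compact_closed; first exact: mx_hausdorff S1_hausdorff.
apply: continuous_compact; first exact/continuous_subspaceT/Emap_cont.
rewrite hv.
have hcl : closed (@cube R n `&` ~` O) by apply: closedI; [exact: cube_closed | exact: open_closedC].
exact: (subclosed_compact hcl (@cube_compact n) (@subIsetl _ _ _)).
Qed.
End Cont.

Section Final.
Variable R : realType.
Local Notation C n := (set_type (@cube R n)).

Lemma quot_pi_cont {T : topologicalType} (r : T -> T -> Prop) : continuous (quot_pi r).
Proof. exact: pi_continuous. Qed.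

Lemma hn_cont n : continuous (fun w : 'rV[S1 R]_n => Zpt (angv w)).
Proof.
pose e := fun x : C n => Emap (val x).
have he x : Zpt (angv (e x)) = Zpt x := G_fformula (existT _ n x).
have hs w : e (angv w) = w.
  by apply/rowP => j; rewrite /e /Emap !mxE expS1_ang.
have cZ : continuous (fun x : C n => Zpt x).
  move=> x; apply: (@continuous_comp _ _ _ (existT _ n) (quot_pi (@Zrel R))).
    exact: existT_continuous.
  exact: quot_pi_cont.
apply/continuousP => U oU.
have -> : (fun w => Zpt (angv w)) @^-1` U = ~` (e @` (~` ((fun x => Zpt x) @^-1` U))).
  apply/seteqP; split => w /=.
  - move=> hU [x hx hxw]; apply: hx => /=; rewrite -he hxw //.
  - move=> h; apply: contrapT => nU; apply: h; exists (angv w) => //; exact: hs.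
apply: closed_openC; apply: e_closed; apply: open_closedC; move/continuousP: cZ; apply.
exact: oU.
Qed.

Lemma gmapJ_cont : continuous (@gmapJ R).
Proof.
apply/quotient_continuous.
have -> : @gmapJ R \o \pi = @Gf R by apply/funext => p; exact: gmapJE.
have -> : @Gf R = (fun p : JDom R => let: existT n w := p in Zpt (angv w)).
  by apply/funext => -[].
apply: sigT_cont => n; exact: hn_cont.
Qed.

Lemma fmapZ_cont : continuous (@fmapZ R).
Proof.
apply/(@quotient_continuous _ {eq_quot gen_equiv_rel (@Zrel R)}).
have -> : @fmapZ R \o \pi = quot_pi (@Jrel R) \o (@fformula R).
  apply/funext => p /=; exact: fmapZE.
move=> x; apply: continuous_comp; [exact: fformula_cont | exact: quot_pi_cont].
Qed.
End Final.

Theorem proposition6p8 (R : realType) :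
  (forall p q : ZDom R, quot_pi (@Zrel R) p = quot_pi (@Zrel R) q ->
     quot_pi (@Jrel R) (fformula p) = quot_pi (@Jrel R) (fformula q)) /\
  exists f : realZ R -> JS1 R,
    (forall p : ZDom R, f (quot_pi (@Zrel R) p) = quot_pi (@Jrel R) (fformula p))
    /\ homeomorphism f.
Proof.
split; first exact: part1.
exists (@fmapZ R); split; first exact: fmapZE.
exists (@gmapJ R); split; [exact: fmapK | exact: gmapK | exact: fmapZ_cont | exact: gmapJ_cont].
Qed.
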